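(* Let $\Lambda,\mu,\beta,\alpha,\gamma,\delta>0$, $\sigma\in[0,1)$, $\xi\ge 0$, $N_{old},\kappa,\kappa_{old}\in[0,1]$, and set $\Delta=\delta\left[(1-\kappa_{old})N_{old}+(1-\kappa)(1-N_{old})\right]$. Consider the system \begin{align*} \frac{dS}{dt}&=\Lambda-\mu S-\beta(1-\sigma)SI+\xi R,\\ \frac{dE}{dt}&=\beta(1-\sigma)SI-(\mu+\alpha)E,\\ \frac{dI}{dt}&=\alpha E-(\mu+\gamma)I-\Delta I,\\ \frac{dR}{dt}&=\gamma I-\mu R-\xi R, \end{align*} and define $$R_0=\frac{\alpha\beta\Lambda(1-\sigma)}{\mu(\mu+\alpha)(\mu+\gamma+\Delta)}.$$ Let $E_{EE}=(S^*,E^*,I^*,R^* )$ denote the endemic equilibrium, i.e. the equilibrium of this system with $S^*=\frac{\Lambda}{\mu R_0}$ and $E^*,I^*,R^*>0$. If $R_0>1$, then $E_{EE}$ is a locally asymptotically stable equilibrium of this system.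
   Context: This is the $(S,E,I,R)$ part of a modified SEIRS epidemic model (the death compartment $D$, with $dD/dt=\Delta I$, does not feed back and is omitted). $\Lambda$ is a birth rate, $\mu$ a natural death rate, $\beta$ the transmission rate, $\alpha$ the rate of becoming infectious, $\gamma$ the recovery rate, $\sigma$ the control-action efficiency, $\xi$ the resusceptibility fraction, $\Delta$ the COVID-19 death rate, and $R_0$ the basic reproduction number with control action. When $R_0>1$ there is exactly one equilibrium with positive $E,I,R$ components, and it has $S^*=\Lambda/(\mu R_0)$. *)

(* Defs.v *)
From Stdlib Require Import Reals.
From Coquelicot Require Import Coquelicot.
Open Scope R_scope.

Definition Delta_rate (delta kappa kappa_old N_old : R) : R :=
  delta * ((1 - kappa_old) * N_old + (1 - kappa) * (1 - N_old)).

Definition repro_number (Lam mu beta alpha gamma sigma Dl : R) : R :=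
  alpha * beta * Lam * (1 - sigma) / (mu * (mu + alpha) * (mu + gamma + Dl)).

Definition state : Type := (R * R * R * R)%type.

Definition seir_field (Lam mu beta alpha gamma sigma xi Dl : R) (x : state) : state :=
  let '(s, e, i, r) := x in
  (Lam - mu * s - beta * (1 - sigma) * s * i + xi * r,
   beta * (1 - sigma) * s * i - (mu + alpha) * e,
   alpha * e - (mu + gamma) * i - Dl * i,
   gamma * i - mu * r - xi * r).

Definition is_equilibrium (F : state -> state) (p : state) : Prop :=
  F p = (0, 0, 0, 0).

Definition dist4 (x y : state) : R :=
  let '(a1, b1, c1, d1) := x in
  let '(a2, b2, c2, d2) := y in
  sqrt ((a1 - a2)^2 + (b1 - b2)^2 + (c1 - c2)^2 + (d1 - d2)^2).

Definition is_solution (F : state -> state)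
  (Sf Ef If Rf : R -> R) : Prop :=
  (filterlim Sf (at_right 0) (locally (Sf 0)) /\
   filterlim Ef (at_right 0) (locally (Ef 0)) /\
   filterlim If (at_right 0) (locally (If 0)) /\
   filterlim Rf (at_right 0) (locally (Rf 0))) /\
  forall t, 0 < t ->
    let '(fS, fE, fI, fR) := F (Sf t, Ef t, If t, Rf t) in
    is_derive Sf t fS /\ is_derive Ef t fE /\ is_derive If t fI /\ is_derive Rf t fR.

Definition locally_asymptotically_stable (F : state -> state) (p : state) : Prop :=
  is_equilibrium F p /\
  (forall eps, 0 < eps -> exists d, 0 < d /\
     forall Sf Ef If Rf, is_solution F Sf Ef If Rf ->
       dist4 (Sf 0, Ef 0, If 0, Rf 0) p < d ->
       forall t, 0 <= t -> dist4 (Sf t, Ef t, If t, Rf t) p < eps) /\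
  (exists d0, 0 < d0 /\
     forall Sf Ef If Rf, is_solution F Sf Ef If Rf ->
       dist4 (Sf 0, Ef 0, If 0, Rf 0) p < d0 ->
       is_lim (fun t => dist4 (Sf t, Ef t, If t, Rf t) p) p_infty 0).

(* Main.v *)
Require Import Defs.
From Stdlib Require Import Reals.
From Coquelicot Require Import Coquelicot.
From Stdlib Require Import Lra Psatz Classical.
Open Scope R_scope.

Lemma d_mult f g x df dg : is_derive f x df -> is_derive g x dg ->
  is_derive (fun t => f t * g t) x (df * g x + f x * dg).
Proof. intros H1 H2. apply (is_derive_mult f g x df dg H1 H2). intros; apply Rmult_comm. Qed.

Lemma d_plus f g x df dg : is_derive f x df -> is_derive g x dg ->
  is_derive (fun t => f t + g t) x (df + dg).
Proof. intros H1 H2. apply (is_derive_plus f g x df dg H1 H2). Qed.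

Lemma d_minus f g x df dg : is_derive f x df -> is_derive g x dg ->
  is_derive (fun t => f t - g t) x (df - dg).
Proof. intros H1 H2. apply (is_derive_minus f g x df dg H1 H2). Qed.

Lemma d_scal f x k df : is_derive f x df -> is_derive (fun t => k * f t) x (k * df).
Proof. intros H; apply is_derive_scal; auto. Qed.

Lemma d_const (a x : R) : is_derive (fun _ : R => a) x 0.
Proof. apply (is_derive_const (V:=R_NormedModule) a x). Qed.

Lemma d_ext (f g : R -> R) x df : (forall t, f t = g t) -> is_derive f x df -> is_derive g x df.
Proof. intros H1 H2. apply (is_derive_ext f g x df); auto. Qed.

Lemma d_val (f : R -> R) x df df' : df = df' -> is_derive f x df -> is_derive f x df'.
Proof. intros ->; auto. Qed.

Definition rc (f : R -> R) := filterlim f (at_right 0) (locally (f 0)).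

Lemma rc_plus f g : rc f -> rc g -> rc (fun t => f t + g t).
Proof. intros H1 H2. unfold rc. eapply filterlim_comp_2; [exact H1|exact H2|].
  apply (filterlim_plus (f 0) (g 0)). Qed.

Lemma rc_mult f g : rc f -> rc g -> rc (fun t => f t * g t).
Proof. intros H1 H2. unfold rc. eapply filterlim_comp_2; [exact H1|exact H2|].
  apply (filterlim_mult (f 0) (g 0)). Qed.

Lemma rc_const a : rc (fun _ => a).
Proof. unfold rc. apply filterlim_const. Qed.


Lemma ball_R (x y e : R) : ball x e y <-> Rabs (y - x) < e.
Proof. unfold ball; simpl; unfold AbsRing_ball, abs, minus, plus, opp; simpl. tauto. Qed.

Lemma deriv_cont_eps f x df : is_derive f x df ->
  forall eps, 0 < eps -> exists d, 0 < d /\ forall y, Rabs (y - x) < d -> Rabs (f y - f x) < eps.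
Proof.
  intros H eps He.
  assert (Hc : continuity_pt f x).
  { apply continuity_pt_filterlim. apply (ex_derive_continuous (V:=R_NormedModule)). exists df; exact H. }
  apply continuity_pt_locally with (eps := mkposreal eps He) in Hc.
  destruct Hc as [d Hd]. exists d. split; [apply cond_pos|].
  intros y Hy. apply Hd. apply ball_R. exact Hy.
Qed.

Lemma rc_eps f : rc f -> forall eps, 0 < eps -> exists d, 0 < d /\ forall y, 0 < y < d -> Rabs (f y - f 0) < eps.
Proof.
  intros H eps He. unfold rc in H. apply filterlim_locally with (eps := mkposreal eps He) in H.
  destruct H as [d Hd]. exists d. split; [apply cond_pos|].
  intros y [Hy1 Hy2]. specialize (Hd y). apply ball_R in Hd; auto.
  apply ball_R. rewrite Rabs_right; lra.
Qed.

Lemma rc_of_deriv0 f df : is_derive f 0 df -> rc f.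
Proof.
  intros H. unfold rc.
  assert (Hc : filterlim f (locally 0) (locally (f 0))).
  { apply (ex_derive_continuous (V:=R_NormedModule)). exists df; exact H. }
  exact (filterlim_filter_le_1 f (filter_le_within (fun u => 0 < u)) Hc).
Qed.

Lemma d_expc (c t : R) : is_derive (fun t => exp (c * t)) t (c * exp (c * t)).
Proof. auto_derive; auto; ring. Qed.

Lemma ode_decay (W dW g : R -> R) (m Mx beta K : R) :
  0 < m -> 0 < Mx -> 0 < beta -> 0 < K ->
  rc W ->
  (forall t, 0 < t -> is_derive W t (dW t)) ->
  (forall t, 0 <= t -> 0 <= g t) ->
  (forall t, 0 <= t -> m * (g t)^2 <= W t) ->
  (forall t, 0 <= t -> W t <= Mx * (g t)^2) ->
  (forall t, 0 < t -> dW t <= - beta * (g t)^2 + K * (g t)^3) ->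
  W 0 < m * (beta/(2*K))^2 ->
  forall t, 0 <= t -> W t <= W 0 * exp (- (beta/(2*Mx)) * t).
Proof.
  intros Hm HM Hb HK HWrc HWd Hg Hlo Hhi HdW HW0.
  set (c0 := beta/(2*Mx)). set (r0 := beta/(2*K)). set (A := m * r0^2).
  assert (Hc0 : 0 < c0) by (unfold c0; apply Rdiv_lt_0_compat; lra).
  assert (Hr0 : 0 < r0) by (unfold r0; apply Rdiv_lt_0_compat; lra).
  assert (HW0pos : 0 <= W 0) by (specialize (Hlo 0 (Rle_refl 0)); nra).
  assert (S1 : forall t, 0 < t -> W t < A -> dW t + c0 * W t <= 0).
  { intros t Ht HWt. pose proof (Hg t (Rlt_le _ _ Ht)) as Hg0.
    pose proof (Hlo t (Rlt_le _ _ Ht)) as Hl. pose proof (Hhi t (Rlt_le _ _ Ht)) as Hh.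
    pose proof (HdW t Ht) as Hd.
    assert (Hgr : g t < r0).
    { unfold A in HWt. destruct (Rlt_dec (g t) r0) as [?|Hn]; auto. exfalso.
      assert (r0 <= g t) by lra. assert (r0^2 <= (g t)^2) by nra. nra. }
    assert (HK2 : K * r0 = beta/2) by (unfold r0; field; lra).
    assert (H3 : K * (g t)^3 <= (beta/2) * (g t)^2).
    { rewrite <- HK2. assert (0 <= (g t)^2) by nra.
      replace (K * g t ^3) with (K * g t * (g t)^2) by ring. 
      apply Rmult_le_compat_r; auto. nra. }
    assert (HcW : c0 * W t <= (beta/2) * (g t)^2).
    { unfold c0. apply Rle_trans with (beta/(2*Mx) * (Mx * (g t)^2)).
      - apply Rmult_le_compat_l; auto. apply Rlt_le, Rdiv_lt_0_compat; lra.
      - right. field. lra. }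
    lra. }
  set (h := fun t => W t * exp (c0 * t)).
  assert (Hh0 : h 0 = W 0) by (unfold h; rewrite Rmult_0_r, exp_0; ring).
  assert (Hhd : forall t, 0 < t -> is_derive h t (dW t * exp (c0 * t) + W t * (c0 * exp (c0 * t)))).
  { intros t Ht. unfold h. apply (d_mult W (fun t => exp (c0*t))); auto. apply d_expc. }
  assert (S2 : forall a b, 0 < a -> a <= b -> (forall t, a <= t <= b -> W t < A) -> h b <= h a).
  { intros a b Ha Hab HA.
    assert (P1 : forall x, Rmin a b < x < Rmax a b -> is_derive h x (dW x * exp (c0 * x) + W x * (c0 * exp (c0 * x)))).
    { intros x Hx. rewrite Rmin_left in Hx by lra. apply Hhd. lra. }
    assert (P2 : forall x, Rmin a b <= x <= Rmax a b -> continuity_pt h x).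
    { intros x Hx. rewrite Rmin_left in Hx by lra. apply continuity_pt_filterlim.
      apply (ex_derive_continuous (V:=R_NormedModule)). eexists. apply Hhd. lra. }
    destruct (MVT_gen h a b (fun t => dW t * exp (c0 * t) + W t * (c0 * exp (c0 * t))) P1 P2) as [c [Hc Heq]].
    rewrite Rmin_left in Hc by lra. rewrite Rmax_right in Hc by lra.
    assert (Hn : dW c + c0 * W c <= 0) by (apply S1; [lra| apply HA; lra]).
    assert (0 < exp (c0 * c)) by apply exp_pos.
    assert (He : (dW c * exp (c0 * c) + W c * (c0 * exp (c0 * c))) = (dW c + c0 * W c) * exp (c0 * c)) by ring.
    rewrite He in Heq.
    assert ((dW c + c0 * W c) * exp (c0 * c) <= 0) by (apply Rmult_le_0_r; lra).
    assert ((dW c + c0 * W c) * exp (c0 * c) * (b - a) <= 0) by (apply Rmult_le_0_r; lra).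
    lra. }
  assert (Hrch : rc h).
  { unfold h. apply rc_mult; auto. apply (rc_of_deriv0 _ _ (d_expc c0 0)). }
  assert (S3 : forall b, 0 < b -> (forall t, 0 <= t <= b -> W t < A) -> h b <= W 0).
  { intros b Hb0 HA. rewrite <- Hh0.
    destruct (Rle_dec (h b) (h 0)) as [?|Hn]; auto. exfalso.
    destruct (rc_eps h Hrch (h b - h 0)) as [d [Hd Hdd]]; [lra|].
    set (y := Rmin d b / 2).
    assert (Hy : 0 < y < d) by (unfold y; pose proof (Rmin_l d b); pose proof (Rmin_r d b);
      pose proof (Rmin_glb_lt d b 0 ltac:(lra) ltac:(lra)) ; lra).
    assert (Hyb : y <= b) by (unfold y; pose proof (Rmin_r d b); lra).
    pose proof (Hdd y Hy) as H1. apply Rabs_def2 in H1.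
    assert (h b <= h y) by (apply S2; auto; [lra| intros; apply HA; lra]).
    lra. }
  assert (S4 : forall T, 0 <= T -> W T < A).
  { intros T HT. destruct (Rlt_dec (W T) A) as [ok|nok]; [exact ok|exfalso].
    set (E := fun t => 0 <= t <= T /\ forall s, 0 <= s <= t -> W s < A).
    assert (HE0 : E 0).
    { split; [lra|]. intros s Hs. replace s with 0 by lra. unfold A, r0; lra. }
    destruct (completeness E) as [L [HL1 HL2]].
    { exists T. intros x [Hx _]. lra. }
    { exists 0; exact HE0. }
    assert (HL0 : 0 <= L) by (apply HL1; exact HE0).
    assert (HLT : L <= T) by (apply HL2; intros x [Hx _]; lra).
    assert (Hbelow : forall s, 0 <= s < L -> W s < A).
    { intros s Hs. destruct (Rlt_dec (W s) A) as [?|Hn]; auto. exfalso.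
      assert (L <= s); [|lra].
      apply HL2. intros e [He1 He2]. destruct (Rle_dec e s) as [?|Hes]; auto.
      exfalso. apply Hn. apply He2. lra. }
    assert (HWL : W L < A).
    { destruct (Req_dec L 0) as [HL|HL].
      - rewrite HL. unfold A, r0; lra.
      - assert (HLp : 0 < L) by lra.
        assert (HhL : h L <= W 0).
        { destruct (Rle_dec (h L) (W 0)) as [?|Hn]; auto. exfalso.
          destruct (deriv_cont_eps h L _ (Hhd L HLp) (h L - W 0)) as [d [Hd Hdd]]; [lra|].
          set (b := Rmax (L - d/2) (L/2)).
          assert (Hb1 : L/2 <= b) by apply Rmax_r.
          assert (Hb2 : L - d/2 <= b) by apply Rmax_l.
          assert (Hb3 : b < L) by (unfold b; apply Rmax_lub_lt; lra).
          assert (Hhb : h b <= W 0) by (apply S3; [lra|]; intros; apply Hbelow; lra).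
          assert (Rabs (b - L) < d) by (rewrite Rabs_left; lra).
          pose proof (Hdd b ltac:(assumption)) as H1. apply Rabs_def2 in H1. lra. }
        unfold h in HhL.
        assert (Hex : 0 < exp (c0 * L)) by apply exp_pos.
        assert (Hex1 : 1 <= exp (c0 * L)).
        { rewrite <- exp_0. left. apply exp_increasing. nra. }
        assert (0 <= W L) by (specialize (Hlo L HL0); nra).
        assert (W L <= W L * exp (c0 * L)) by nra.
        assert (W 0 < A) by (unfold A, r0; lra).
        lra. }
    assert (HLT' : L < T).
    { destruct (Req_dec L T) as [He|He]; [|lra]. rewrite He in HWL. contradiction. }
    assert (Hright : exists d, 0 < d /\ forall s, L <= s < L + d -> W s < A).
    { destruct (Req_dec L 0) as [HL|HL].
      - destruct (rc_eps W HWrc (A - W 0)) as [d [Hd Hdd]]; [rewrite HL in HWL; lra|].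
        exists d; split; auto. intros s Hs. rewrite HL in Hs.
        destruct (Req_dec s 0) as [Hs0|Hs0]; [rewrite Hs0; rewrite HL in HWL; exact HWL|].
        pose proof (Hdd s ltac:(lra)) as H1. apply Rabs_def2 in H1. lra.
      - destruct (deriv_cont_eps W L _ (HWd L ltac:(lra)) (A - W L)) as [d [Hd Hdd]]; [lra|].
        exists d; split; auto. intros s Hs.
        assert (Rabs (s - L) < d) by (rewrite Rabs_right; lra).
        pose proof (Hdd s ltac:(assumption)) as H1. apply Rabs_def2 in H1. lra. }
    destruct Hright as [d [Hd Hdd]].
    set (L' := Rmin (L + d/2) T).
    assert (HL'1 : L' <= T) by apply Rmin_r.
    assert (HL'2 : L' <= L + d/2) by apply Rmin_l.
    assert (HL'3 : L < L') by (unfold L'; apply Rmin_glb_lt; lra).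
    assert (HEL' : E L').
    { split; [lra|]. intros s Hs. destruct (Rlt_dec s L) as [Hsl|Hsl].
      - apply Hbelow; lra.
      - apply Hdd; lra. }
    specialize (HL1 L' HEL'). lra. }
  intros t Ht. destruct (Req_dec t 0) as [Ht0|Ht0].
  - rewrite Ht0, Rmult_0_r, exp_0. lra.
  - assert (Hht : h t <= W 0) by (apply S3; [lra|]; intros; apply S4; lra).
    unfold h in Hht.
    assert (Hee : exp (c0 * t) * exp (- c0 * t) = 1) by (rewrite <- exp_plus; replace (c0 * t + - c0 * t) with 0 by ring; apply exp_0).
    assert (0 < exp (- c0 * t)) by apply exp_pos.
    replace (W t) with (W t * exp (c0 * t) * exp (- c0 * t)) by (rewrite Rmult_assoc, Hee; ring).
    fold c0. apply Rmult_le_compat_r; lra.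
Qed.

Lemma init_small (W g : R -> R) (m Mx c : R) :
  0 < m -> 0 < Mx -> 0 < c -> 0 <= g 0 -> W 0 <= Mx * (g 0)^2 ->
  g 0 < c * sqrt (m / (2*Mx)) -> W 0 < m * c^2.
Proof.
  intros Hm HM Hc Hg HW Hlt.
  assert (Hs : 0 < m / (2*Mx)) by (apply Rdiv_lt_0_compat; lra).
  assert (Hsq : sqrt (m/(2*Mx)) * sqrt (m/(2*Mx)) = m/(2*Mx)) by (apply sqrt_sqrt; lra).
  set (s := sqrt (m/(2*Mx))) in *.
  assert (H2 : (g 0)^2 < c^2 * (m/(2*Mx))) by (rewrite <- Hsq; nra).
  assert (H3 : Mx * (c^2 * (m/(2*Mx))) = m * c^2 / 2) by (field; lra).
  assert (0 < c^2) by nra.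
  nra.
Qed.

Lemma las_abstract (W dW g : R -> R) (m Mx beta K : R) :
  0 < m -> 0 < Mx -> 0 < beta -> 0 < K ->
  rc W ->
  (forall t, 0 < t -> is_derive W t (dW t)) ->
  (forall t, 0 <= t -> 0 <= g t) ->
  (forall t, 0 <= t -> m * (g t)^2 <= W t) ->
  (forall t, 0 <= t -> W t <= Mx * (g t)^2) ->
  (forall t, 0 < t -> dW t <= - beta * (g t)^2 + K * (g t)^3) ->
  (forall eps, 0 < eps -> g 0 < Rmin (beta/(2*K)) eps * sqrt (m/(2*Mx)) ->
     forall t, 0 <= t -> g t < eps) /\
  (g 0 < (beta/(2*K)) * sqrt (m/(2*Mx)) -> is_lim g p_infty 0).
Proof.
  intros Hm HM Hb HK HWrc HWd Hg Hlo Hhi HdW.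
  set (r0 := beta/(2*K)).
  assert (Hr0 : 0 < r0) by (unfold r0; apply Rdiv_lt_0_compat; lra).
  set (c0 := beta/(2*Mx)).
  assert (Hc0 : 0 < c0) by (unfold c0; apply Rdiv_lt_0_compat; lra).
  assert (Hg0 := Hg 0 (Rle_refl 0)). assert (Hh0 := Hhi 0 (Rle_refl 0)).
  split.
  - intros eps He Hlt t Ht.
    assert (Hmin : 0 < Rmin r0 eps) by (apply Rmin_glb_lt; lra).
    assert (HW0 : W 0 < m * (Rmin r0 eps)^2) by (apply (init_small W g m Mx); auto).
    assert (Hmr : (Rmin r0 eps)^2 <= r0^2) by (pose proof (Rmin_l r0 eps); nra).
    assert (Hme : (Rmin r0 eps)^2 <= eps^2) by (pose proof (Rmin_r r0 eps); nra).
    assert (HW0' : W 0 < m * r0^2) by nra.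
    pose proof (ode_decay W dW g m Mx beta K Hm HM Hb HK HWrc HWd Hg Hlo Hhi HdW HW0' t Ht) as Hd.
    assert (Hex : exp (- (beta/(2*Mx)) * t) <= 1).
    { rewrite <- exp_0. destruct (Req_dec t 0) as [->|Ht0]; [rewrite Rmult_0_r; lra|].
      left. apply exp_increasing. fold c0. nra. }
    assert (HW0p : 0 <= W 0) by (specialize (Hlo 0 (Rle_refl 0)); nra).
    assert (W t <= W 0) by nra.
    pose proof (Hlo t Ht). pose proof (Hg t Ht).
    assert ((g t)^2 < eps^2) by nra.
    nra.
  - intros Hlt.
    assert (HW0 : W 0 < m * r0^2) by (apply (init_small W g m Mx); auto).
    assert (HW0p : 0 <= W 0) by (specialize (Hlo 0 (Rle_refl 0)); nra).
    apply is_lim_spec. intros eps. simpl.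
    set (e := pos eps). assert (He : 0 < e) by apply cond_pos.
    set (Mt := Rmax 0 ((ln (W 0 + 1) - ln (m * e^2)) / c0)).
    exists Mt. intros t Ht.
    assert (Ht0 : 0 <= t) by (pose proof (Rmax_l 0 ((ln (W 0 + 1) - ln (m * e^2)) / c0)); unfold Mt in Ht; lra).
    assert (Ht1 : (ln (W 0 + 1) - ln (m * e^2)) / c0 < t) by (pose proof (Rmax_r 0 ((ln (W 0 + 1) - ln (m * e^2)) / c0)); unfold Mt in Ht; lra).
    pose proof (ode_decay W dW g m Mx beta K Hm HM Hb HK HWrc HWd Hg Hlo Hhi HdW HW0 t Ht0) as Hd.
    fold c0 in Hd.
    assert (Hme : 0 < m * e^2) by (apply Rmult_lt_0_compat; [lra| apply pow_lt; lra]).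
    assert (Hlt2 : - c0 * t < ln (m * e^2) - ln (W 0 + 1)).
    { apply Rmult_lt_compat_r with (r := c0) in Ht1; auto.
      unfold Rdiv in Ht1. rewrite Rmult_assoc, Rinv_l, Rmult_1_r in Ht1 by lra. lra. }
    apply exp_increasing in Hlt2.
    rewrite <- ln_div in Hlt2 by lra. rewrite exp_ln in Hlt2 by (apply Rdiv_lt_0_compat; lra).
    assert (Hx : W 0 * exp (- c0 * t) < m * e^2).
    { assert (W 0 * exp (- c0 * t) <= (W 0 + 1) * exp (-c0*t)) by (pose proof (exp_pos (-c0*t)); nra).
      assert ((W 0 + 1) * exp (-c0*t) < (W 0 + 1) * (m * e ^ 2 / (W 0 + 1))) by (apply Rmult_lt_compat_l; lra).
      assert ((W 0 + 1) * (m * e ^ 2 / (W 0 + 1)) = m * e^2) by (field; lra).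
      lra. }
    pose proof (Hlo t Ht0). pose proof (Hg t Ht0).
    assert ((g t)^2 < e^2) by nra.
    rewrite Rminus_0_r, Rabs_right by lra. nra.
Qed.

Definition ee (mu p m1 m2 : R) := p / (4*(m1+m2) + 8*(mu+p)).
Definition cc (p m1 : R) := p / m1.
Definition aa (p m1 m2 : R) := 2 * cc p m1 * m2 / (m1+m2).
Definition BB (mu p m1 m2 tau kap : R) := p * tau * (m1+m2+tau+kap) / (m1*m2) + ee mu p m1 m2 * p.

Definition Vz (mu p m1 m2 tau kap x y q t : R) :=
  /2*(x*x) + ee mu p m1 m2 * x*q + aa p m1 m2 /2*(y*y) + cc p m1 *y*q
  + cc p m1/(2*m2)*((m1+m2)*(q*q) + tau*((q-t)*(q-t)) + tau*(m1+m2)/kap*(t*t))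
  + ee mu p m1 m2 * p/kap*(t*t).

Definition Dform (mu p m1 m2 tau kap x y q t : R) :=
  let e := ee mu p m1 m2 in let M := m1+m2 in
  -(mu+p)*(x*x) + (2*p*m2/M + e*m2)*x*y - (p*m2/m1)*(y*y) - e*(mu+p+tau)*x*(q-t)
  - e*(mu+p)*x*t - BB mu p m1 m2 tau kap*((q-t)*(q-t)) - e*p*(t*t).

Definition Nform (mu p m1 m2 tau kap x y q t : R) :=
  let e := ee mu p m1 m2 in
  p * x * (q + tau/kap*t) * (-x + (1-e)*q + 2*m2/(m1+m2)*y).

Definition gradV (mu p m1 m2 tau kap x y q t dx dy dq dt : R) :=
  let e := ee mu p m1 m2 in let c := cc p m1 in let a := aa p m1 m2 in let M := m1+m2 in
  (x + e*q)*dx + (a*y + c*q)*dy + (e*x + c*y + c/(2*m2)*(2*M*q + 2*tau*(q-t)))*dq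
  + (c/(2*m2)*(-2*tau*(q-t) + 2*tau*M/kap*t) + 2*e*p/kap*t)*dt.

Lemma dV_eq mu p m1 m2 tau kap x y q t :
  0 < mu -> 0 < p -> 0 < m1 -> 0 < m2 -> 0 <= tau -> 0 < kap ->
  let v := q + tau/kap*t in
  gradV mu p m1 m2 tau kap x y q t
    (-(mu+p)*x - p*q - p*x*v) (m1*x - (m1+m2)*y + m1*x*v) (m2*y - tau*(q-t)) (kap*(q-t))
  = Dform mu p m1 m2 tau kap x y q t + Nform mu p m1 m2 tau kap x y q t.
Proof.
  intros. unfold gradV, Dform, Nform, BB, aa, cc, ee, v. field. repeat split; lra.
Qed.

Lemma split_cross (c d U x w : R) : 0 < d -> c*c <= 2*d*U -> c*x*w <= d/2*(w*w) + U*(x*x).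
Proof.
  intros Hd Hc.
  assert (H : 2*d*(d/2*(w*w) + U*(x*x) - c*x*w) = (d*w - c*x)*(d*w - c*x) + (2*d*U - c*c)*(x*x)) by (field; lra).
  assert (0 <= (d*w - c*x)*(d*w - c*x)) by apply Rle_0_sqr.
  assert (0 <= (2*d*U - c*c)*(x*x)) by (apply Rmult_le_pos; [lra|apply Rle_0_sqr]).
  nra.
Qed.

Lemma e_facts mu p m1 m2 : 0 < mu -> 0 < p -> 0 < m1 -> 0 < m2 ->
  0 < ee mu p m1 m2 /\ ee mu p m1 m2 * (4*(m1+m2)) <= p /\ ee mu p m1 m2 * (8*(mu+p)) <= p.
Proof.
  intros. unfold ee. set (Dn := 4*(m1+m2) + 8*(mu+p)). assert (0 < Dn) by (unfold Dn; lra).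
  assert (Hq : p / Dn * Dn = p) by (field; lra).
  assert (Hp : 0 < p / Dn) by (apply Rdiv_lt_0_compat; lra).
  split; [auto|]. split.
  - apply Rle_trans with (p/Dn*Dn); [apply Rmult_le_compat_l; [lra|unfold Dn; lra]|lra].
  - apply Rle_trans with (p/Dn*Dn); [apply Rmult_le_compat_l; [lra|unfold Dn; lra]|lra].
Qed.

Lemma term1 (p m1 m2 e : R) : 0 < p -> 0 < m1 -> 0 < m2 -> 0 < e -> e*(4*(m1+m2)) <= p ->
  (2*p*m2/(m1+m2) + e*m2)*(2*p*m2/(m1+m2) + e*m2) <= 2*(p*m2/m1)*(81*p/128).
Proof.
  intros Hp H1 H2 He Hle. set (M := m1+m2) in *. assert (HM : 0 < M) by (unfold M; lra).
  set (c1 := 2*p*m2/M + e*m2).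
  assert (HX : c1 * M = m2*(2*p + e*M)) by (unfold c1; field; lra).
  assert (Hc1 : 0 <= c1) by (unfold c1; assert (0 < 2*p*m2/M) by (apply Rdiv_lt_0_compat; nra); nra).
  assert (HX2 : c1*M <= m2*(9*p/4)) by (rewrite HX; apply Rmult_le_compat_l; lra).
  assert (HX3 : (c1*M)*(c1*M) <= (m2*(9*p/4))*(m2*(9*p/4))) by (apply Rmult_le_compat; nra).
  assert (HMM : 4*m1*m2 <= M*M) by (unfold M; pose proof (Rle_0_sqr (m1-m2)); unfold Rsqr in *; nra).
  assert (Hgoal : c1*c1*(64*m1*(M*M)) <= 81*p*p*m2*(M*M)).
  { replace (c1*c1*(64*m1*(M*M))) with (64*m1*((c1*M)*(c1*M))) by ring.
    apply Rle_trans with (64*m1*((m2*(9*p/4))*(m2*(9*p/4)))).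
    - apply Rmult_le_compat_l; nra.
    - replace (64*m1*((m2*(9*p/4))*(m2*(9*p/4)))) with (81*p*p*m2*(4*m1*m2)) by field.
      apply Rmult_le_compat_l; [|exact HMM]. assert (0 < p*p) by nra. nra. }
  assert (HR : 2*(p*m2/m1)*(81*p/128) = 81*p*p*m2/(64*m1)) by (field; lra).
  rewrite HR. 
  apply Rmult_le_reg_r with (64*m1*(M*M)); [apply Rmult_lt_0_compat; [lra| apply Rmult_lt_0_compat; lra]|].
  replace (81*p*p*m2/(64*m1)*(64*m1*(M*M))) with (81*p*p*m2*(M*M)) by (field; lra).
  exact Hgoal.
Qed.

Lemma term2 (mu p m1 m2 tau kap e : R) : 0 < mu -> 0 < p -> 0 < m1 -> 0 < m2 -> 0 <= tau -> 0 < kap ->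
  0 < e -> e*(4*(m1+m2)) <= p -> e*(8*(mu+p)) <= p ->
  (e*(mu+p+tau))*(e*(mu+p+tau)) <= 2*(p*tau*(m1+m2+tau+kap)/(m1*m2) + e*p)*((mu+p)/8 + p/64).
Proof.
  intros Hmu Hp H1 H2 Ht Hk He Hl1 Hl2. set (M := m1+m2) in *.
  assert (HM : 0 < M) by (unfold M; lra).
  set (G := p*tau*(M+tau+kap)/(m1*m2)).
  assert (HG : 0 <= G) by (unfold G; unfold Rdiv; apply Rmult_le_pos; [apply Rmult_le_pos; [nra|lra]| apply Rlt_le, Rinv_0_lt_compat; nra]).
  assert (Hsq : (e*(mu+p+tau))*(e*(mu+p+tau)) <= 2*(e*(mu+p))*(e*(mu+p)) + 2*(e*tau)*(e*tau)).
  { pose proof (Rle_0_sqr (e*(mu+p) - e*tau)). unfold Rsqr in *. nra. }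
  assert (Hi : 2*(e*(mu+p))*(e*(mu+p)) <= 2*(e*p)*((mu+p)/8)).
  { assert (0 <= e*(mu+p)) by nra. nra. }
  assert (HMM : 4*m1*m2 <= M*M) by (unfold M; pose proof (Rle_0_sqr (m1-m2)); unfold Rsqr in *; nra).
  assert (He2 : 64*(e*e)*(m1*m2) <= p*p).
  { assert (0 <= e*(4*M)) by nra.
    assert ((e*(4*M))*(e*(4*M)) <= p*p) by (apply Rmult_le_compat; lra).
    nra. }
  assert (Hii : 2*(e*tau)*(e*tau) <= 2*G*(p/64)).
  { unfold G.
    assert (Htt : tau*tau <= tau*(M+tau+kap)) by nra.
    replace (2*(p*tau*(M+tau+kap)/(m1*m2))*(p/64)) with ((p*p)/(32*(m1*m2)) * (tau*(M+tau+kap))) by (field; lra).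
    apply Rle_trans with (2*(e*e)*(tau*(M+tau+kap))).
    - replace (2*(e*tau)*(e*tau)) with (2*(e*e)*(tau*tau)) by ring. apply Rmult_le_compat_l; nra.
    - apply Rmult_le_compat_r; [nra|].
      apply Rmult_le_reg_r with (32*(m1*m2)); [nra|].
      replace (p*p/(32*(m1*m2))*(32*(m1*m2))) with (p*p) by (field; lra). nra. }
  assert (2*(G + e*p)*((mu+p)/8 + p/64) = 2*(e*p)*((mu+p)/8) + 2*G*(p/64) + 2*G*((mu+p)/8) + 2*(e*p)*(p/64)) by ring.
  assert (0 <= 2*G*((mu+p)/8)) by nra.
  assert (0 <= 2*(e*p)*(p/64)) by nra.
  unfold G in *. lra.
Qed.

Lemma term3 (mu p e : R) : 0 < mu -> 0 < p -> 0 < e -> e*(8*(mu+p)) <= p ->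
  (e*(mu+p))*(e*(mu+p)) <= 2*(e*p)*((mu+p)/16).
Proof. intros. assert (0 <= e*(mu+p)) by nra. nra. Qed.

Lemma D_bound mu p m1 m2 tau kap x y q t : 0 < mu -> 0 < p -> 0 < m1 -> 0 < m2 -> 0 <= tau -> 0 < kap ->
  Dform mu p m1 m2 tau kap x y q t <=
  - ((mu+p)/8)*(x*x) - (p*m2/(2*m1))*(y*y) - (BB mu p m1 m2 tau kap/2)*((q-t)*(q-t))
  - (ee mu p m1 m2 * p/2)*(t*t).
Proof.
  intros Hmu Hp H1 H2 Ht Hk.
  destruct (e_facts mu p m1 m2 Hmu Hp H1 H2) as [He [Hl1 Hl2]].
  set (e := ee mu p m1 m2) in *.
  assert (HB : BB mu p m1 m2 tau kap = p*tau*(m1+m2+tau+kap)/(m1*m2) + e*p) by reflexivity.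
  assert (HBp : 0 < BB mu p m1 m2 tau kap).
  { rewrite HB. assert (0 <= p*tau*(m1+m2+tau+kap)/(m1*m2)).
    { unfold Rdiv; apply Rmult_le_pos; [apply Rmult_le_pos; [nra|lra]| apply Rlt_le, Rinv_0_lt_compat; nra]. }
    nra. }
  set (B := BB mu p m1 m2 tau kap) in *.
  assert (Hd1 : 0 < p*m2/m1) by (apply Rdiv_lt_0_compat; nra).
  pose proof (split_cross (2*p*m2/(m1+m2) + e*m2) (p*m2/m1) (81*p/128) x y Hd1 (term1 p m1 m2 e Hp H1 H2 He Hl1)) as C1.
  pose proof (split_cross (e*(mu+p+tau)) B ((mu+p)/8 + p/64) x (-(q-t)) HBp) as C2.
  rewrite HB in C2. specialize (C2 (term2 mu p m1 m2 tau kap e Hmu Hp H1 H2 Ht Hk He Hl1 Hl2)).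
  rewrite <- HB in C2.
  assert (Hd3 : 0 < e*p) by nra.
  pose proof (split_cross (e*(mu+p)) (e*p) ((mu+p)/16) x (-t) Hd3 (term3 mu p e Hmu Hp He Hl2)) as C3.
  unfold Dform. fold e. fold B.
  assert (Hxx : 0 <= x*x) by nra.
  replace (p*m2/(2*m1)) with ((p*m2/m1)/2) by (field; lra).
  nra.
Qed.

Definition betaz mu p m1 m2 := Rmin (Rmin ((mu+p)/8) (p*m2/(2*m1))) (ee mu p m1 m2 * p/8).

Lemma D_bound2 mu p m1 m2 tau kap x y q t : 0 < mu -> 0 < p -> 0 < m1 -> 0 < m2 -> 0 <= tau -> 0 < kap ->
  Dform mu p m1 m2 tau kap x y q t <= - betaz mu p m1 m2 * (x*x + y*y + q*q + t*t).
Proof.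
  intros Hmu Hp H1 H2 Ht Hk.
  pose proof (D_bound mu p m1 m2 tau kap x y q t Hmu Hp H1 H2 Ht Hk) as HD.
  destruct (e_facts mu p m1 m2 Hmu Hp H1 H2) as [He [Hl1 Hl2]].
  set (e := ee mu p m1 m2) in *.
  assert (HBe : e*p <= BB mu p m1 m2 tau kap).
  { unfold BB. fold e. assert (0 <= p*tau*(m1+m2+tau+kap)/(m1*m2)).
    { unfold Rdiv; apply Rmult_le_pos; [apply Rmult_le_pos; [nra|lra]| apply Rlt_le, Rinv_0_lt_compat; nra]. }
    lra. }
  set (b := betaz mu p m1 m2).
  assert (Hb1 : b <= (mu+p)/8) by (unfold b, betaz; eapply Rle_trans; [apply Rmin_l|apply Rmin_l]).
  assert (Hb2 : b <= p*m2/(2*m1)) by (unfold b, betaz; eapply Rle_trans; [apply Rmin_l|apply Rmin_r]).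
  assert (Hb3 : b <= e*p/8) by (unfold b, betaz; apply Rmin_r).
  assert (Hb0 : 0 <= b).
  { unfold b, betaz. apply Rmin_glb; [apply Rmin_glb|].
    - lra. - apply Rlt_le, Rdiv_lt_0_compat; nra. - fold e. nra. }
  assert (Hs : q*q + t*t <= 4*((q-t)*(q-t) + t*t)) by (pose proof (Rle_0_sqr (q - 2*t)); unfold Rsqr in *; nra).
  assert (Hx : 0 <= x*x) by exact (Rle_0_sqr _). assert (Hy : 0 <= y*y) by exact (Rle_0_sqr _).
  assert (Hst : 0 <= (q-t)*(q-t)) by exact (Rle_0_sqr _). assert (Htt : 0 <= t*t) by exact (Rle_0_sqr _).
  assert (b*(x*x) <= (mu+p)/8*(x*x)) by (apply Rmult_le_compat_r; auto).
  assert (b*(y*y) <= p*m2/(2*m1)*(y*y)) by (apply Rmult_le_compat_r; auto).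
  assert (b*(q*q+t*t) <= e*p/8*(4*((q-t)*(q-t) + t*t))).
  { apply Rle_trans with (e*p/8*(q*q+t*t)); [apply Rmult_le_compat_r; nra|apply Rmult_le_compat_l; nra]. }
  assert (BB mu p m1 m2 tau kap/2*((q-t)*(q-t)) >= e*p/2*((q-t)*(q-t))) by nra.
  nra.
Qed.

Lemma abs_le_norm (a S : R) : a*a <= S -> Rabs a <= sqrt S.
Proof. intros H. rewrite <- sqrt_Rsqr_abs. apply sqrt_le_1_alt. unfold Rsqr. exact H. Qed.

Lemma N_bound mu p m1 m2 tau kap x y q t : 0 < mu -> 0 < p -> 0 < m1 -> 0 < m2 -> 0 <= tau -> 0 < kap ->
  Nform mu p m1 m2 tau kap x y q t <= 4*p*(1 + tau/kap) * (sqrt (x*x+y*y+q*q+t*t))^3.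
Proof.
  intros Hmu Hp H1 H2 Ht Hk.
  destruct (e_facts mu p m1 m2 Hmu Hp H1 H2) as [He [Hl1 Hl2]].
  set (e := ee mu p m1 m2) in *.
  set (S := x*x+y*y+q*q+t*t).
  assert (Hx2 := Rle_0_sqr x). assert (Hy2 := Rle_0_sqr y). assert (Hq2 := Rle_0_sqr q). assert (Ht2 := Rle_0_sqr t).
  unfold Rsqr in *.
  set (n := sqrt S).
  assert (Hn : 0 <= n) by apply sqrt_pos.
  assert (Ax : Rabs x <= n) by (apply abs_le_norm; unfold S; lra).
  assert (Ay : Rabs y <= n) by (apply abs_le_norm; unfold S; lra).
  assert (Aq : Rabs q <= n) by (apply abs_le_norm; unfold S; lra).
  assert (At : Rabs t <= n) by (apply abs_le_norm; unfold S; lra).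
  assert (Htk : 0 <= tau/kap) by (apply Rmult_le_pos; [lra| apply Rlt_le, Rinv_0_lt_compat; lra]).
  assert (Av : Rabs (q + tau/kap*t) <= (1 + tau/kap)*n).
  { eapply Rle_trans; [apply Rabs_triang|]. rewrite Rabs_mult, (Rabs_right (tau/kap)) by lra. nra. }
  assert (He1 : e <= 1) by nra.
  assert (HM : 0 < 2*m2/(m1+m2) <= 2).
  { split; [apply Rdiv_lt_0_compat; lra|]. apply Rmult_le_reg_r with (m1+m2); [lra|].
    unfold Rdiv; rewrite Rmult_assoc, Rinv_l by lra. nra. }
  assert (Ab : Rabs (-x + (1-e)*q + 2*m2/(m1+m2)*y) <= 4*n).
  { eapply Rle_trans; [apply Rabs_triang|]. rewrite Rabs_mult, (Rabs_right (2*m2/(m1+m2))) by lra.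
    eapply Rle_trans; [apply Rplus_le_compat_r; apply Rabs_triang|].
    rewrite Rabs_Ropp, Rabs_mult, (Rabs_right (1-e)) by lra.
    assert ((1-e)*Rabs q <= n) by (pose proof (Rabs_pos q); nra).
    assert (2*m2/(m1+m2)*Rabs y <= 2*n) by (pose proof (Rabs_pos y); nra).
    lra. }
  unfold Nform. fold e.
  eapply Rle_trans; [apply Rle_abs|].
  rewrite !Rabs_mult, (Rabs_right p) by lra.
  pose proof (Rabs_pos x). pose proof (Rabs_pos (q + tau/kap*t)). pose proof (Rabs_pos (-x + (1-e)*q + 2*m2/(m1+m2)*y)).
  apply Rle_trans with (p * n * ((1+tau/kap)*n) * (4*n)).
  - assert (0 <= p * Rabs x) by (apply Rmult_le_pos; lra).
    assert (0 <= p * Rabs x * Rabs (q + tau/kap*t)) by (apply Rmult_le_pos; lra).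
    apply Rmult_le_compat; [lra|lra| |exact Ab].
    apply Rmult_le_compat; [lra|lra| |exact Av].
    apply Rmult_le_compat_l; lra.
  - right. ring.
Qed.

Definition mz mu p m1 m2 kap :=
  Rmin (Rmin (1/4) (cc p m1 * m2/(4*(m1+m2)))) (Rmin (cc p m1 *(m1+m2)/(12*m2)) (ee mu p m1 m2 * p/kap)).

Lemma V_low mu p m1 m2 tau kap x y q t : 0 < mu -> 0 < p -> 0 < m1 -> 0 < m2 -> 0 <= tau -> 0 < kap ->
  0 < mz mu p m1 m2 kap /\
  mz mu p m1 m2 kap * (x*x+y*y+q*q+t*t) <= Vz mu p m1 m2 tau kap x y q t.
Proof.
  intros Hmu Hp H1 H2 Ht Hk.
  destruct (e_facts mu p m1 m2 Hmu Hp H1 H2) as [He [Hl1 Hl2]].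
  set (e := ee mu p m1 m2) in *.
  set (M := m1+m2) in *. assert (HM : 0 < M) by (unfold M; lra).
  assert (Hc : 0 < cc p m1) by (unfold cc; apply Rdiv_lt_0_compat; lra).
  set (c := cc p m1) in *.
  assert (Hc1 : 0 < c * m2/(4*M)) by (apply Rdiv_lt_0_compat; nra).
  assert (Hc2 : 0 < c * M/(12*m2)) by (apply Rdiv_lt_0_compat; nra).
  assert (Hc3 : 0 < e * p/kap) by (apply Rdiv_lt_0_compat; nra).
  assert (Hmz : 0 < mz mu p m1 m2 kap).
  { unfold mz. fold e c M. apply Rmin_glb_lt; apply Rmin_glb_lt; lra. }
  split; [exact Hmz|].
  set (m := mz mu p m1 m2 kap) in *.
  assert (Hm1 : m <= 1/4) by (unfold m, mz; eapply Rle_trans; [apply Rmin_l|apply Rmin_l]).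
  assert (Hm2 : m <= c*m2/(4*M)) by (unfold m, mz; eapply Rle_trans; [apply Rmin_l|apply Rmin_r]).
  assert (Hm3 : m <= c*M/(12*m2)) by (unfold m, mz; eapply Rle_trans; [apply Rmin_r|apply Rmin_l]).
  assert (Hm4 : m <= e*p/kap) by (unfold m, mz; eapply Rle_trans; [apply Rmin_r|apply Rmin_r]).
  assert (HMM : 4*m1*m2 <= M*M) by (unfold M; pose proof (Rle_0_sqr (m1-m2)); unfold Rsqr in *; nra).
  assert (He8 : e <= 1/8) by nra.
  assert (HeM : e*M <= p/4) by nra.
  assert (Hee : e*e <= c*M/(12*m2)).
  { unfold c, cc. replace (p/m1*M/(12*m2)) with (p*M/(12*(m1*m2))) by (field; lra).
    apply Rmult_le_reg_r with (12*(m1*m2)); [nra|].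
    replace (p*M/(12*(m1*m2))*(12*(m1*m2))) with (p*M) by (field; lra).
    assert (e*e*(12*(m1*m2)) <= e*e*(3*(M*M))) by (apply Rmult_le_compat_l; nra).
    assert (e*e*(3*(M*M)) = 3*M*e*(e*M)) by ring.
    assert (3*M*e*(e*M) <= 3*M*(1/8)*(p/4)).
    { apply Rmult_le_compat; try nra. }
    nra. }
  assert (Hid : Vz mu p m1 m2 tau kap x y q t =
     1/4*(x*x) + c*m2/(4*M)*(y*y) + c*M/(12*m2)*(q*q) + e*p/kap*(t*t)
     + 1/4*((x+2*e*q)*(x+2*e*q)) + c*M/(3*m2)*((q + 3*m2/(2*M)*y)*(q + 3*m2/(2*M)*y))
     + (c*M/(12*m2) - e*e)*(q*q) + c*tau/(2*m2)*((q-t)*(q-t)) + c*tau*M/(2*m2*kap)*(t*t)).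
  { unfold Vz, aa. fold e c M. field. repeat split; lra. }
  rewrite Hid.
  assert (Hx2 := Rle_0_sqr x). assert (Hy2 := Rle_0_sqr y). assert (Hq2 := Rle_0_sqr q). assert (Ht2 := Rle_0_sqr t).
  assert (P1 := Rle_0_sqr (x+2*e*q)). assert (P2 := Rle_0_sqr (q + 3*m2/(2*M)*y)). assert (P3 := Rle_0_sqr (q-t)).
  unfold Rsqr in *.
  assert (0 <= c*M/(3*m2)) by (apply Rlt_le, Rdiv_lt_0_compat; nra).
  assert (0 <= c*tau/(2*m2)) by (apply Rmult_le_pos; [nra| apply Rlt_le, Rinv_0_lt_compat; lra]).
  assert (0 <= c*tau*M/(2*m2*kap)) by (apply Rmult_le_pos; [apply Rmult_le_pos; [apply Rmult_le_pos; lra|lra]| apply Rlt_le, Rinv_0_lt_compat; apply Rmult_lt_0_compat; lra]).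
  assert (0 <= c*M/(3*m2)*((q + 3*m2/(2*M)*y)*(q + 3*m2/(2*M)*y))) by (apply Rmult_le_pos; lra).
  assert (0 <= (c*M/(12*m2) - e*e)*(q*q)) by (apply Rmult_le_pos; lra).
  assert (0 <= c*tau/(2*m2)*((q-t)*(q-t))) by (apply Rmult_le_pos; lra).
  assert (0 <= c*tau*M/(2*m2*kap)*(t*t)) by (apply Rmult_le_pos; lra).
  assert (m*(x*x) <= 1/4*(x*x)) by (apply Rmult_le_compat_r; lra).
  assert (m*(y*y) <= c*m2/(4*M)*(y*y)) by (apply Rmult_le_compat_r; lra).
  assert (m*(q*q) <= c*M/(12*m2)*(q*q)) by (apply Rmult_le_compat_r; lra).
  assert (m*(t*t) <= e*p/kap*(t*t)) by (apply Rmult_le_compat_r; lra).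
  lra.
Qed.

Definition Mzv mu p m1 m2 tau kap :=
  1/2 + ee mu p m1 m2 + aa p m1 m2 + cc p m1 + cc p m1/(2*m2)*((m1+m2) + 2*tau + tau*(m1+m2)/kap) + ee mu p m1 m2 * p/kap.

Lemma V_high mu p m1 m2 tau kap x y q t : 0 < mu -> 0 < p -> 0 < m1 -> 0 < m2 -> 0 <= tau -> 0 < kap ->
  0 < Mzv mu p m1 m2 tau kap /\
  Vz mu p m1 m2 tau kap x y q t <= Mzv mu p m1 m2 tau kap * (x*x+y*y+q*q+t*t).
Proof.
  intros Hmu Hp H1 H2 Ht Hk.
  destruct (e_facts mu p m1 m2 Hmu Hp H1 H2) as [He [Hl1 Hl2]].
  unfold Vz, Mzv.
  set (e := ee mu p m1 m2) in *.
  set (M := m1+m2) in *. assert (HM : 0 < M) by (unfold M; lra).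
  assert (Hc : 0 < cc p m1) by (unfold cc; apply Rdiv_lt_0_compat; lra).
  assert (Ha : 0 < aa p m1 m2) by (unfold aa; apply Rdiv_lt_0_compat; [nra|lra]).
  set (c := cc p m1) in *. set (a := aa p m1 m2) in *.
  assert (Hc2 : 0 < c/(2*m2)) by (apply Rdiv_lt_0_compat; lra).
  assert (Htk : 0 <= tau*M/kap) by (apply Rmult_le_pos; [nra| apply Rlt_le, Rinv_0_lt_compat; lra]).
  assert (Hep : 0 < e*p/kap) by (apply Rdiv_lt_0_compat; nra).
  set (S := x*x+y*y+q*q+t*t).
  assert (Hx2 := Rle_0_sqr x). assert (Hy2 := Rle_0_sqr y). assert (Hq2 := Rle_0_sqr q). assert (Ht2 := Rle_0_sqr t).
  assert (P1 := Rle_0_sqr (x-q)). assert (P2 := Rle_0_sqr (y-q)). assert (P3 := Rle_0_sqr (q+t)).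
  unfold Rsqr in *.
  assert (Hk1 : 0 <= M + 2*tau + tau*M/kap) by lra.
  split.
  { assert (0 <= c/(2*m2)*(M + 2*tau + tau*M/kap)) by (apply Rmult_le_pos; lra). lra. }
  assert (T1 : e*x*q <= e*S) by (unfold S; nra).
  assert (T2 : a/2*(y*y) <= a*S) by (unfold S; nra).
  assert (T3 : c*y*q <= c*S) by (unfold S; nra).
  assert (T4 : M*(q*q) + tau*((q-t)*(q-t)) + tau*M/kap*(t*t) <= (M + 2*tau + tau*M/kap)*S).
  { assert (M*(q*q) <= M*S) by (apply Rmult_le_compat_l; unfold S; lra).
    assert (tau*((q-t)*(q-t)) <= 2*tau*S) by (unfold S; nra).
    assert (tau*M/kap*(t*t) <= tau*M/kap*S) by (apply Rmult_le_compat_l; unfold S; lra).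
    lra. }
  assert (T5 : c/(2*m2)*(M*(q*q) + tau*((q-t)*(q-t)) + tau*M/kap*(t*t)) <= c/(2*m2)*((M + 2*tau + tau*M/kap)*S))
    by (apply Rmult_le_compat_l; lra).
  assert (T6 : e*p/kap*(t*t) <= e*p/kap*S) by (apply Rmult_le_compat_l; unfold S; lra).
  assert (T0 : /2*(x*x) <= 1/2*S) by (unfold S; lra).
  replace (c/(2*m2)*((M + 2*tau + tau*M/kap)*S)) with (c/(2*m2)*(M + 2*tau + tau*M/kap)*S) in T5 by ring.
  nra.
Qed.

Lemma chain_V mu p m1 m2 tau kap (x y q tt : R -> R) (s dx dy dq dt : R) :
  m2 <> 0 -> kap <> 0 -> is_derive x s dx -> is_derive y s dy -> is_derive q s dq -> is_derive tt s dt ->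
  is_derive (fun u => Vz mu p m1 m2 tau kap (x u) (y u) (q u) (tt u)) s
    (gradV mu p m1 m2 tau kap (x s) (y s) (q s) (tt s) dx dy dq dt).
Proof.
  intros Hm2 Hk Hx Hy Hq Ht. unfold Vz. auto_derive.
  - repeat split; eexists; eassumption.
  - replace (Derive (fun x0 => x x0) s) with dx by (symmetry; apply is_derive_unique; exact Hx).
    replace (Derive (fun x0 => y x0) s) with dy by (symmetry; apply is_derive_unique; exact Hy).
    replace (Derive (fun x0 => q x0) s) with dq by (symmetry; apply is_derive_unique; exact Hq).
    replace (Derive (fun x0 => tt x0) s) with dt by (symmetry; apply is_derive_unique; exact Ht).
    unfold gradV. generalize (x s) (y s) (q s) (tt s). intros. field. auto.
Qed.

Lemma red_field (Lam mu bb alpha gamma xi Dl Ss Es Is Rs S E I R : R) :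
  0 < mu -> 0 < alpha -> 0 < gamma -> 0 <= xi -> 0 <= Dl -> 0 < bb ->
  0 < Ss -> 0 < Es -> 0 < Is -> 0 < Rs ->
  Lam - mu*Ss - bb*Ss*Is + xi*Rs = 0 ->
  bb*Ss*Is - (mu+alpha)*Es = 0 ->
  alpha*Es - (mu+gamma)*Is - Dl*Is = 0 ->
  gamma*Is - mu*Rs - xi*Rs = 0 ->
  bb*Ss*alpha = (mu+alpha)*(mu+gamma+Dl) ->
  let m1 := mu+alpha in let m2 := mu+gamma+Dl in
  let p := bb*Is in let tau := xi*gamma/(bb*Ss) in let kap := mu+xi-tau in
  let x := (S-Ss)/Ss in let y := (E-Es)/Es - (I-Is)/Is in
  let q := (I-Is)/Is - tau/gamma*((R-Rs)/Is) in let tt := kap/gamma*((R-Rs)/Is) in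
  kap <> 0 ->
  (Lam - mu*S - bb*S*I + xi*R)/Ss = -(mu+p)*x - p*q - p*x*(q + tau/kap*tt) /\
  ((bb*S*I - (mu+alpha)*E)/Es - (alpha*E - (mu+gamma)*I - Dl*I)/Is)
     = m1*x - (m1+m2)*y + m1*x*(q + tau/kap*tt) /\
  ((alpha*E - (mu+gamma)*I - Dl*I)/Is - tau/gamma*((gamma*I - mu*R - xi*R)/Is)) = m2*y - tau*(q-tt) /\
  kap/gamma*((gamma*I - mu*R - xi*R)/Is) = kap*(q-tt).
Proof.
  intros Hmu Hal Hga Hxi HDl Hbb HS HE HI HR h1 h2 h3 h4 h5 m1 m2 p tau kap x y q tt Hk.
  assert (HEs : Es = (mu+gamma+Dl)*Is/alpha) by (field_simplify; [|lra]; apply Rmult_eq_reg_l with alpha; [|lra]; field_simplify; lra).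
  assert (HRs : Rs = gamma*Is/(mu+xi)) by (apply Rmult_eq_reg_l with (mu+xi); [field_simplify; lra|lra]).
  assert (HLam : Lam = mu*Ss + bb*Ss*Is - xi*Rs) by lra.
  assert (Hbb' : bb = (mu+alpha)*(mu+gamma+Dl)/(alpha*Ss)) by (apply Rmult_eq_reg_l with (alpha*Ss); [field_simplify; lra|nra]).
  unfold m1, m2, p, x, y, q, tt, kap, tau in *.
  subst Lam. subst Es. subst Rs. subst bb.
  repeat split; field; repeat split; try lra.
  all: apply Rgt_not_eq; assert (Hm : (mu+alpha)*(mu+gamma+Dl) - alpha*gamma > 0) by nra;
       assert (Hm2 : 0 < (mu+alpha)*(mu+gamma+Dl)) by nra; nra.
Qed.

Lemma sum4 a b c d A B C D : 0 <= a -> 0 <= b -> 0 <= c -> 0 <= d ->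
  0 <= A -> 0 <= B -> 0 <= C -> 0 <= D ->
  a*A + b*B + c*C + d*D <= (a+b+c+d)*(A+B+C+D).
Proof. intros. nra. Qed.

Lemma sq2 a b : (a+b)*(a+b) <= 2*(a*a) + 2*(b*b).
Proof. pose proof (Rle_0_sqr (a-b)). unfold Rsqr in *. nra. Qed.

Lemma sq3 a b c : (a+b+c)*(a+b+c) <= 3*(a*a) + 3*(b*b) + 3*(c*c).
Proof. pose proof (Rle_0_sqr (a-b)). pose proof (Rle_0_sqr (a-c)). pose proof (Rle_0_sqr (b-c)). unfold Rsqr in *. nra. Qed.

Definition C2c Ss Es Is gamma tau kap :=
  1/(Ss*Ss) + 2/(Es*Es) + 4/(Is*Is) + (2*((tau/(gamma*Is))*(tau/(gamma*Is))) + (kap/(gamma*Is))*(kap/(gamma*Is))).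

Lemma z_le_w Ss Es Is gamma tau kap ws we wi wr : 0 < Ss -> 0 < Es -> 0 < Is -> 0 < gamma -> 
  let x := ws/Ss in let y := we/Es - wi/Is in
  let q := wi/Is - tau/gamma*(wr/Is) in let tt := kap/gamma*(wr/Is) in
  0 < C2c Ss Es Is gamma tau kap /\
  x*x+y*y+q*q+tt*tt <= C2c Ss Es Is gamma tau kap * (ws*ws+we*we+wi*wi+wr*wr).
Proof.
  intros HS HE HI Hg x y q tt.
  assert (H1 : x*x = 1/(Ss*Ss)*(ws*ws)) by (unfold x; field; lra).
  assert (H2 : y*y <= 2/(Es*Es)*(we*we) + 2/(Is*Is)*(wi*wi)).
  { unfold y. replace (2/(Es*Es)*(we*we) + 2/(Is*Is)*(wi*wi)) with (2*((we/Es)*(we/Es)) + 2*((-(wi/Is))*(-(wi/Is)))) by (field; lra).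
    apply sq2. }
  assert (H3 : q*q <= 2/(Is*Is)*(wi*wi) + 2*((tau/(gamma*Is))*(tau/(gamma*Is)))*(wr*wr)).
  { unfold q. replace (2/(Is*Is)*(wi*wi) + 2*((tau/(gamma*Is))*(tau/(gamma*Is)))*(wr*wr)) with (2*((wi/Is)*(wi/Is)) + 2*((-(tau/gamma*(wr/Is)))*(-(tau/gamma*(wr/Is))))) by (field; lra).
    apply sq2. }
  assert (H4 : tt*tt = (kap/(gamma*Is))*(kap/(gamma*Is))*(wr*wr)) by (unfold tt; field; lra).
  assert (P1 : 0 < 1/(Ss*Ss)) by (apply Rdiv_lt_0_compat; nra).
  assert (P2 : 0 < 2/(Es*Es)) by (apply Rdiv_lt_0_compat; nra).
  assert (P3 : 0 < 4/(Is*Is)) by (apply Rdiv_lt_0_compat; nra).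
  assert (P4 : 0 <= 2*((tau/(gamma*Is))*(tau/(gamma*Is))) + (kap/(gamma*Is))*(kap/(gamma*Is))).
  { pose proof (Rle_0_sqr (tau/(gamma*Is))). pose proof (Rle_0_sqr (kap/(gamma*Is))). unfold Rsqr in *. lra. }
  split; [unfold C2c; lra|].
  assert (E4 : 4/(Is*Is) = 2/(Is*Is) + 2/(Is*Is)) by (field; lra).
  pose proof (sum4 (1/(Ss*Ss)) (2/(Es*Es)) (4/(Is*Is)) (2*((tau/(gamma*Is))*(tau/(gamma*Is))) + (kap/(gamma*Is))*(kap/(gamma*Is)))
     (ws*ws) (we*we) (wi*wi) (wr*wr) ltac:(lra) ltac:(lra) ltac:(lra) P4
     (Rle_0_sqr ws) (Rle_0_sqr we) (Rle_0_sqr wi) (Rle_0_sqr wr)) as HS4.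
  unfold C2c. nra.
Qed.

Definition C1c Ss Es Is gamma tau kap :=
  Ss*Ss + 3*(Es*Es) + (2*(Is*Is) + 3*(Es*Es))*(1 + (tau/kap)*(tau/kap)) + (gamma*Is/kap)*(gamma*Is/kap).

Lemma w_le_z Ss Es Is gamma tau kap ws we wi wr : 0 < Ss -> 0 < Es -> 0 < Is -> 0 < gamma -> 0 < kap ->
  let x := ws/Ss in let y := we/Es - wi/Is in
  let q := wi/Is - tau/gamma*(wr/Is) in let tt := kap/gamma*(wr/Is) in
  0 < C1c Ss Es Is gamma tau kap /\
  ws*ws+we*we+wi*wi+wr*wr <= C1c Ss Es Is gamma tau kap * (x*x+y*y+q*q+tt*tt).
Proof.
  intros HS HE HI Hg Hk x y q tt.
  set (r := tau/kap).
  assert (I1 : ws = Ss*x) by (unfold x; field; lra).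
  assert (I2 : wi = Is*(q + r*tt)) by (unfold q, tt, r; field; lra).
  assert (I3 : we = Es*(y + q + r*tt)) by (unfold y, q, tt, r; field; lra).
  assert (I4 : wr = gamma*Is/kap*tt) by (unfold tt; field; lra).
  assert (Hr := Rle_0_sqr r). assert (Hx := Rle_0_sqr x). assert (Hy := Rle_0_sqr y).
  assert (Hq := Rle_0_sqr q). assert (Ht := Rle_0_sqr tt). unfold Rsqr in *.
  assert (J2 : wi*wi <= (Is*Is)*(2*(q*q) + 2*((r*r)*(tt*tt)))).
  { rewrite I2. replace (Is*(q+r*tt)*(Is*(q+r*tt))) with ((Is*Is)*((q+r*tt)*(q+r*tt))) by ring.
    apply Rmult_le_compat_l; [nra|]. replace ((r*r)*(tt*tt)) with ((r*tt)*(r*tt)) by ring. apply sq2. }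
  assert (J3 : we*we <= (Es*Es)*(3*(y*y) + 3*(q*q) + 3*((r*r)*(tt*tt)))).
  { rewrite I3. replace (Es*(y+q+r*tt)*(Es*(y+q+r*tt))) with ((Es*Es)*((y+q+r*tt)*(y+q+r*tt))) by ring.
    apply Rmult_le_compat_l; [nra|]. replace ((r*r)*(tt*tt)) with ((r*tt)*(r*tt)) by ring. apply sq3. }
  assert (J4 : wr*wr = (gamma*Is/kap)*(gamma*Is/kap)*(tt*tt)) by (rewrite I4; ring).
  assert (J1 : ws*ws = Ss*Ss*(x*x)) by (rewrite I1; ring).
  assert (Hg2 := Rle_0_sqr (gamma*Is/kap)). unfold Rsqr in *.
  assert (PS : 0 < Ss*Ss) by nra. assert (PE : 0 < Es*Es) by nra. assert (PI : 0 < Is*Is) by nra.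
  split; [unfold C1c; fold r; nra|].
  pose proof (sum4 (Ss*Ss) (3*(Es*Es)) ((2*(Is*Is) + 3*(Es*Es))) ((2*(Is*Is) + 3*(Es*Es))*(r*r) + (gamma*Is/kap)*(gamma*Is/kap))
     (x*x) (y*y) (q*q) (tt*tt) ltac:(lra) ltac:(lra) ltac:(lra) ltac:(nra) Hx Hy Hq Ht) as HS4.
  unfold C1c; fold r. nra.
Qed.

Lemma d_aff (f : R -> R) (c d t df : R) : is_derive f t df ->
  is_derive (fun u => (f u - c)/d) t (df/d).
Proof.
  intros H. apply d_ext with (fun u => /d * (f u - c)).
  - intros; unfold Rdiv; ring.
  - assert (E : /d * (df - 0) = df / d) by (unfold Rdiv; ring).
    apply (d_val _ _ _ _ E). apply d_scal. apply d_minus; auto. apply d_const.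
Qed.

Lemma rc_minus f g : rc f -> rc g -> rc (fun t => f t - g t).
Proof.
  intros H1 H2.
  assert (H3 : rc (fun t => f t + (-1) * g t)) by (apply rc_plus; auto; apply rc_mult; auto; apply rc_const).
  unfold rc in *. cbv beta in *.
  assert (Heq : f 0 - g 0 = f 0 + -1 * g 0) by ring. rewrite Heq.
  apply (filterlim_ext (fun t => f t + -1 * g t)); [intros; ring | exact H3].
Qed.

Lemma dist4_eq a b c d a' b' c' d' :
  dist4 (a,b,c,d) (a',b',c',d') = sqrt ((a-a')*(a-a') + (b-b')*(b-b') + (c-c')*(c-c') + (d-d')*(d-d')).
Proof. unfold dist4. f_equal. ring. Qed.
Lemma rc_divc f c : rc f -> rc (fun t => f t / c).
Proof. intros H. unfold Rdiv. apply (rc_mult f (fun _ => / c)); auto. apply rc_const. Qed.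

Ltac rc_solve :=
  lazymatch goal with
  | |- rc (fun _ => ?c) => apply rc_const
  | |- rc (fun t => @?a t + @?b t) => apply (rc_plus a b); rc_solve
  | |- rc (fun t => @?a t - @?b t) => apply (rc_minus a b); rc_solve
  | |- rc (fun t => @?a t * @?b t) => apply (rc_mult a b); rc_solve
  | |- rc (fun t => @?a t / ?c) => apply (rc_divc a c); rc_solve
  | |- rc ?f => assumption
  end.

Lemma rc_Vz mu p m1 m2 tau kap (x y q tt : R -> R) : rc x -> rc y -> rc q -> rc tt ->
  rc (fun t => Vz mu p m1 m2 tau kap (x t) (y t) (q t) (tt t)).
Proof.
  intros Hx Hy Hq Ht. unfold Vz. rc_solve.
Qed.

Theorem lemma4 (Lam mu beta alpha gamma delta sigma xi N_old kappa kappa_old : R)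
  (hLam : 0 < Lam) (hmu : 0 < mu) (hbeta : 0 < beta) (halpha : 0 < alpha)
  (hgamma : 0 < gamma) (hdelta : 0 < delta)
  (hsigma : 0 <= sigma < 1) (hxi : 0 <= xi)
  (hN : 0 <= N_old <= 1) (hk : 0 <= kappa <= 1) (hko : 0 <= kappa_old <= 1)
  (Ss Es Is Rs : R) :
  let Dl := Delta_rate delta kappa kappa_old N_old in
  let F := seir_field Lam mu beta alpha gamma sigma xi Dl in
  repro_number Lam mu beta alpha gamma sigma Dl > 1 ->
  is_equilibrium F (Ss, Es, Is, Rs) ->
  Ss = Lam / (mu * repro_number Lam mu beta alpha gamma sigma Dl) ->
  0 < Es -> 0 < Is -> 0 < Rs ->
  locally_asymptotically_stable F (Ss, Es, Is, Rs).
Proof.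
  intros Dl F HR0 Heq HSs HE HI HR.
  assert (HDl : 0 <= Dl).
  { unfold Dl, Delta_rate. apply Rmult_le_pos; [lra|]. nra. }
  clearbody Dl.
  pose proof Heq as Heq0.
  unfold is_equilibrium, F, seir_field in Heq. injection Heq. intros h4 h3 h2 h1. clear Heq.
  set (bb := beta * (1 - sigma)) in *.
  assert (Hbb : 0 < bb) by (unfold bb; nra).
  assert (HR0p : 0 < repro_number Lam mu beta alpha gamma sigma Dl) by lra.
  assert (HS : 0 < Ss) by (rewrite HSs; apply Rdiv_lt_0_compat; nra).
  assert (h5 : bb*Ss*alpha = (mu+alpha)*(mu+gamma+Dl)).
  { rewrite HSs. unfold repro_number, bb. field. repeat split; try lra; nra. }
  set (m1 := mu+alpha). set (m2 := mu+gamma+Dl).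
  set (p := bb*Is). set (tau := xi*gamma/(bb*Ss)). set (kap := mu+xi-tau).
  assert (Hm1 : 0 < m1) by (unfold m1; lra). assert (Hm2 : 0 < m2) by (unfold m2; lra).
  assert (Hp : 0 < p) by (unfold p; nra).
  assert (Hk_eq : bb*Ss = m1*m2/alpha) by (apply Rmult_eq_reg_r with alpha; [|lra]; unfold m1, m2; field_simplify; lra).
  assert (Htau : 0 <= tau) by (unfold tau; apply Rmult_le_pos; [nra|apply Rlt_le, Rinv_0_lt_compat; nra]).
  assert (Htau2 : tau <= xi).
  { unfold tau. rewrite Hk_eq. 
    assert (alpha*gamma <= m1*m2) by (unfold m1, m2; nra).
    replace (xi*gamma/(m1*m2/alpha)) with (xi * (alpha*gamma/(m1*m2))) by (field; lra).
    assert (alpha*gamma/(m1*m2) <= 1).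
    { apply Rmult_le_reg_r with (m1*m2); [nra|]. unfold Rdiv. rewrite Rmult_assoc, Rinv_l by nra. lra. }
    nra. }
  assert (Hkap : 0 < kap) by (unfold kap; lra).
  destruct (V_low mu p m1 m2 tau kap 0 0 0 0 hmu Hp Hm1 Hm2 Htau Hkap) as [Hmz _].
  destruct (V_high mu p m1 m2 tau kap 0 0 0 0 hmu Hp Hm1 Hm2 Htau Hkap) as [HMz _].
  destruct (z_le_w Ss Es Is gamma tau kap 0 0 0 0 HS HE HI hgamma) as [HC2 _].
  destruct (w_le_z Ss Es Is gamma tau kap 0 0 0 0 HS HE HI hgamma Hkap) as [HC1 _].
  assert (Hbz : 0 < betaz mu p m1 m2).
  { destruct (e_facts mu p m1 m2 hmu Hp Hm1 Hm2) as [He _].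
    unfold betaz. apply Rmin_glb_lt; [apply Rmin_glb_lt|].
    - lra. - apply Rdiv_lt_0_compat; nra. - apply Rdiv_lt_0_compat; nra. }
  set (mzv := mz mu p m1 m2 kap) in *.
  set (Mzv' := Mzv mu p m1 m2 tau kap) in *.
  set (bz := betaz mu p m1 m2) in *.
  set (C1 := C1c Ss Es Is gamma tau kap) in *.
  set (C2 := C2c Ss Es Is gamma tau kap) in *.
  set (Kz := 4*p*(1 + tau/kap)).
  assert (HKz : 0 < Kz) by (unfold Kz; assert (0 <= tau/kap) by (apply Rmult_le_pos; [lra|apply Rlt_le, Rinv_0_lt_compat; lra]); nra).
  set (m := mzv / C1). set (Mx := Mzv' * C2). set (be := bz / C1).
  set (K := Kz * C2 * sqrt C2).
  assert (Hm : 0 < m) by (unfold m; apply Rdiv_lt_0_compat; lra).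
  assert (HMx : 0 < Mx) by (unfold Mx; nra).
  assert (Hbe : 0 < be) by (unfold be; apply Rdiv_lt_0_compat; lra).
  assert (HsC2 : 0 < sqrt C2) by (apply sqrt_lt_R0; lra).
  assert (HK : 0 < K) by (unfold K; apply Rmult_lt_0_compat; [nra|lra]).
  assert (KEY : forall Sf Ef If Rf, is_solution F Sf Ef If Rf ->
    (forall eps, 0 < eps -> dist4 (Sf 0, Ef 0, If 0, Rf 0) (Ss, Es, Is, Rs) < Rmin (be/(2*K)) eps * sqrt (m/(2*Mx)) ->
      forall t, 0 <= t -> dist4 (Sf t, Ef t, If t, Rf t) (Ss, Es, Is, Rs) < eps) /\
    (dist4 (Sf 0, Ef 0, If 0, Rf 0) (Ss, Es, Is, Rs) < (be/(2*K)) * sqrt (m/(2*Mx)) ->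
      is_lim (fun t => dist4 (Sf t, Ef t, If t, Rf t) (Ss, Es, Is, Rs)) p_infty 0)).
  { intros Sf Ef If Rf [[rS [rE [rI rR]]] Hder].
    set (xf := fun t => (Sf t - Ss)/Ss).
    set (yf := fun t => (Ef t - Es)/Es - (If t - Is)/Is).
    set (qf := fun t => (If t - Is)/Is - tau/gamma*((Rf t - Rs)/Is)).
    set (tf := fun t => kap/gamma*((Rf t - Rs)/Is)).
    set (W := fun t => Vz mu p m1 m2 tau kap (xf t) (yf t) (qf t) (tf t)).
    set (dW := fun t => gradV mu p m1 m2 tau kap (xf t) (yf t) (qf t) (tf t)
       ((Lam - mu * Sf t - bb * Sf t * If t + xi * Rf t)/Ss)
       ((bb * Sf t * If t - (mu+alpha) * Ef t)/Es - (alpha * Ef t - (mu+gamma) * If t - Dl * If t)/Is)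
       ((alpha * Ef t - (mu+gamma) * If t - Dl * If t)/Is - tau/gamma*((gamma * If t - mu * Rf t - xi * Rf t)/Is))
       (kap/gamma*((gamma * If t - mu * Rf t - xi * Rf t)/Is))).
    set (g := fun t => dist4 (Sf t, Ef t, If t, Rf t) (Ss, Es, Is, Rs)).
    assert (HrcW : rc W).
    { unfold W. apply rc_Vz; unfold xf, yf, qf, tf; rc_solve. }
    assert (HdW : forall t, 0 < t -> is_derive W t (dW t)).
    { intros t Ht. specialize (Hder t Ht). unfold F, seir_field in Hder.
      destruct Hder as [dS [dE [dI dR]]].
      unfold W, dW. apply chain_V; [lra|lra| | | | ].
      - apply (d_aff Sf Ss Ss t _ dS).
      - apply d_minus; [apply (d_aff Ef Es Es t _ dE)|apply (d_aff If Is Is t _ dI)].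
      - apply d_minus; [apply (d_aff If Is Is t _ dI)|]. apply d_scal. apply (d_aff Rf Rs Is t _ dR).
      - apply d_scal. apply (d_aff Rf Rs Is t _ dR). }
    assert (Hg : forall t, 0 <= t -> 0 <= g t) by (intros; unfold g; rewrite dist4_eq; apply sqrt_pos).
    assert (PT : forall t, 
      let nz2 := xf t * xf t + yf t * yf t + qf t * qf t + tf t * tf t in
      let G2 := (Sf t - Ss)*(Sf t - Ss) + (Ef t - Es)*(Ef t - Es) + (If t - Is)*(If t - Is) + (Rf t - Rs)*(Rf t - Rs) in
      g t = sqrt G2 /\ 0 <= G2 /\ (g t)^2 = G2 /\ G2 <= C1 * nz2 /\ nz2 <= C2 * G2).
    { intros t nz2 G2.
      assert (HG2 : 0 <= G2).
      { unfold G2. pose proof (Rle_0_sqr (Sf t - Ss)). pose proof (Rle_0_sqr (Ef t - Es)).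
        pose proof (Rle_0_sqr (If t - Is)). pose proof (Rle_0_sqr (Rf t - Rs)). unfold Rsqr in *. lra. }
      assert (Hgt : g t = sqrt G2) by (unfold g; rewrite dist4_eq; reflexivity).
      split; [exact Hgt|]. split; [exact HG2|]. split; [rewrite Hgt; apply pow2_sqrt; exact HG2|].
      split.
      - exact (proj2 (w_le_z Ss Es Is gamma tau kap (Sf t - Ss) (Ef t - Es) (If t - Is) (Rf t - Rs) HS HE HI hgamma Hkap)).
      - exact (proj2 (z_le_w Ss Es Is gamma tau kap (Sf t - Ss) (Ef t - Es) (If t - Is) (Rf t - Rs) HS HE HI hgamma)). }
    assert (Hlo : forall t, 0 <= t -> m * (g t)^2 <= W t).
    { intros t _. destruct (PT t) as [_ [HG2 [Hg2 [H1 H2]]]].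
      pose proof (proj2 (V_low mu p m1 m2 tau kap (xf t) (yf t) (qf t) (tf t) hmu Hp Hm1 Hm2 Htau Hkap)) as HV.
      fold mzv in HV. unfold W. rewrite Hg2. unfold m.
      apply Rle_trans with (mzv * (xf t * xf t + yf t * yf t + qf t * qf t + tf t * tf t)); [|exact HV].
      apply Rmult_le_reg_r with C1; [lra|].
      replace (mzv / C1 * ((Sf t - Ss)*(Sf t - Ss) + (Ef t - Es)*(Ef t - Es) + (If t - Is)*(If t - Is) + (Rf t - Rs)*(Rf t - Rs)) * C1)
        with (mzv * ((Sf t - Ss)*(Sf t - Ss) + (Ef t - Es)*(Ef t - Es) + (If t - Is)*(If t - Is) + (Rf t - Rs)*(Rf t - Rs))) by (field; lra).
      nra. }
    assert (Hhi : forall t, 0 <= t -> W t <= Mx * (g t)^2).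
    { intros t _. destruct (PT t) as [_ [HG2 [Hg2 [H1 H2]]]].
      pose proof (proj2 (V_high mu p m1 m2 tau kap (xf t) (yf t) (qf t) (tf t) hmu Hp Hm1 Hm2 Htau Hkap)) as HV.
      fold Mzv' in HV. unfold W. rewrite Hg2. unfold Mx.
      eapply Rle_trans; [exact HV|]. rewrite Rmult_assoc. apply Rmult_le_compat_l; lra. }
    assert (HdWb : forall t, 0 < t -> dW t <= - be * (g t)^2 + K * (g t)^3).
    { intros t Ht. destruct (PT t) as [Hgt [HG2 [Hg2 [H1 H2]]]].
      set (nz2 := xf t * xf t + yf t * yf t + qf t * qf t + tf t * tf t) in *.
      set (G2 := (Sf t - Ss)*(Sf t - Ss) + (Ef t - Es)*(Ef t - Es) + (If t - Is)*(If t - Is) + (Rf t - Rs)*(Rf t - Rs)) in *.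
      pose proof (red_field Lam mu bb alpha gamma xi Dl Ss Es Is Rs (Sf t) (Ef t) (If t) (Rf t)
         hmu halpha hgamma hxi HDl Hbb HS HE HI HR h1 h2 h3 h4 h5) as Hred.
      cbv zeta in Hred. specialize (Hred (Rgt_not_eq _ _ Hkap)).
      destruct Hred as [e1 [e2 [e3 e4]]].
      fold tau in e1, e2, e3, e4. fold kap in e1, e2, e3, e4.
      assert (Edw : dW t = Dform mu p m1 m2 tau kap (xf t) (yf t) (qf t) (tf t) + Nform mu p m1 m2 tau kap (xf t) (yf t) (qf t) (tf t)).
      { unfold dW. rewrite e1, e2, e3, e4.
        exact (dV_eq mu p m1 m2 tau kap (xf t) (yf t) (qf t) (tf t) hmu Hp Hm1 Hm2 Htau Hkap). }
      rewrite Edw.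
      pose proof (D_bound2 mu p m1 m2 tau kap (xf t) (yf t) (qf t) (tf t) hmu Hp Hm1 Hm2 Htau Hkap) as HD.
      pose proof (N_bound mu p m1 m2 tau kap (xf t) (yf t) (qf t) (tf t) hmu Hp Hm1 Hm2 Htau Hkap) as HN.
      fold bz nz2 in HD. fold nz2 Kz in HN.
      assert (HA : - bz * nz2 <= - be * (g t)^2).
      { rewrite Hg2. unfold be. 
        assert (bz / C1 * G2 <= bz * nz2).
        { apply Rmult_le_reg_r with C1; [lra|].
          replace (bz / C1 * G2 * C1) with (bz * G2) by (field; lra). nra. }
        lra. }
      assert (Hgnn : 0 <= g t) by (rewrite Hgt; apply sqrt_pos).
      assert (HB1 : sqrt nz2 <= sqrt C2 * g t).
      { rewrite Hgt, <- sqrt_mult by lra. apply sqrt_le_1_alt. exact H2. }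
      assert (HB2 : (sqrt nz2)^3 <= (sqrt C2 * g t)^3) by (apply pow_incr; split; [apply sqrt_pos|exact HB1]).
      assert (HB3 : (sqrt C2 * g t)^3 = C2 * sqrt C2 * (g t)^3).
      { replace ((sqrt C2 * g t)^3) with ((sqrt C2 * sqrt C2) * sqrt C2 * (g t)^3) by ring.
        rewrite sqrt_sqrt by lra. reflexivity. }
      assert (HB4 : Kz * (sqrt nz2)^3 <= K * (g t)^3).
      { unfold K. replace (Kz*C2*sqrt C2*(g t)^3) with (Kz*(C2*sqrt C2*(g t)^3)) by ring.
        rewrite <- HB3. apply Rmult_le_compat_l; lra. }
      lra. }
    pose proof (las_abstract W dW g m Mx be K Hm HMx Hbe HK HrcW HdW Hg Hlo Hhi HdWb) as [L1 L2].
    split; [exact L1|exact L2]. }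
  split; [exact Heq0|]. split.
  - intros eps Heps. exists (Rmin (be/(2*K)) eps * sqrt (m/(2*Mx))). split.
    + apply Rmult_lt_0_compat.
      * apply Rmin_glb_lt; [apply Rdiv_lt_0_compat; lra|lra].
      * apply sqrt_lt_R0. apply Rdiv_lt_0_compat; lra.
    + intros Sf Ef If Rf Hsol Hd t Ht. exact (proj1 (KEY Sf Ef If Rf Hsol) eps Heps Hd t Ht).
  - exists (be/(2*K) * sqrt (m/(2*Mx))). split.
    + apply Rmult_lt_0_compat; [apply Rdiv_lt_0_compat; lra|]. apply sqrt_lt_R0. apply Rdiv_lt_0_compat; lra.
    + intros Sf Ef If Rf Hsol Hd. exact (proj2 (KEY Sf Ef If Rf Hsol) Hd).
Qed.
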